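(* Let $c \in (0,1/2]$, $t_1 \in [0,1-2c]$, $t_2 \in [t_1+c,1-c]$, and $p,q \in (0,1)$ with $p\neq q$. Define $\Phi_1:\mathbb{R}\to\mathbb{R}\cup\{\infty\}$ by \[ \Phi_1(r) = \frac{t_2-t_1}{1-c}\,\frac{c(p-q)^2+(1-c)(p+q-2r)}{(1-c)+c(p+q-2r)}. \] Then: (1) $\Phi_1$ is a rational function of $r$ with one simple pole at $\frac{p+q}{2}+\frac{1-c}{2c}$, which lies strictly to the right of the interval $\Lambda_{p,q}$; (2) $\Phi_1$ has one root, at $\frac{p+q}{2}+\frac{c(p-q)^2}{2(1-c)}$, which lies strictly to the right of $\Lambda_{p,q}$ and strictly to the left of the pole; (3) $\Phi_1$ is differentiable at every $r\in\mathbb{R}$ other than the pole, with \[ \Phi_1'(r) = 2(t_2-t_1)\frac{c^2(p-q)^2-(1-c)^2}{(1-c)\big(1-c+c(p+q-2r)\big)^2} < 0, \] so $\Phi_1$ is strictly decreasing on $\Lambda_{p,q}$; (4) $\Phi_1$ is strictly positive on $\Lambda_{p,q}$.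
   Context: $\Lambda_{p,q}$ denotes the open interval $\{r\in\mathbb{R}: \max\{0,p+q-1\}<r<\min\{p,q\}\}$. *)

(* Defs.v *)
From Stdlib Require Export Reals Lra.
From Coquelicot Require Export Coquelicot.
Open Scope R_scope.

Definition Lambda (p q r : R) : Prop :=
  Rmax 0 (p + q - 1) < r < Rmin p q.

Definition Phi1_num (c p q r : R) : R :=
  c * (p - q)^2 + (1 - c) * (p + q - 2 * r).
Definition Phi1_den (c p q r : R) : R :=
  (1 - c) + c * (p + q - 2 * r).

(* Phi_1(r).  At the pole (den = 0) the value is Stdlib's junk r/0;
   the theorem only makes claims about Phi1 away from the pole. *)
Definition Phi1 (c t1 t2 p q r : R) : R :=
  (t2 - t1) / (1 - c) * (Phi1_num c p q r / Phi1_den c p q r).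

(* Main.v *)
Require Import Defs.
From Stdlib Require Import Reals Lra.
From Coquelicot Require Import Coquelicot.
Open Scope R_scope.

Lemma lim_inv_abs (a : R) : is_lim (fun r => / Rabs (r - a)) a p_infty.
Proof.
  unfold is_lim.
  eapply filterlim_comp with (G := at_right 0); [|exact filterlim_Rinv_0_right].
  intros P [eps HP]. simpl. exists eps. intros y Hy Hya.
  apply HP.
  - unfold ball in *; simpl in *; unfold AbsRing_ball, abs, minus, plus, opp in *; simpl in *.
    rewrite Ropp_0, Rplus_0_r, Rabs_Rabsolu. exact Hy.
  - apply Rabs_pos_lt. intro h; apply Hya; lra.
Qed.

Theorem proposition2p2 (c t1 t2 p q : R) :
  0 < c <= 1 / 2 ->
  0 <= t1 <= 1 - 2 * c ->
  t1 + c <= t2 <= 1 - c ->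
  0 < p < 1 -> 0 < q < 1 -> p <> q ->
  let pole := (p + q) / 2 + (1 - c) / (2 * c) in
  let root := (p + q) / 2 + c * (p - q)^2 / (2 * (1 - c)) in
  (* (1) one simple pole at [pole], strictly to the right of Lambda *)
  ((forall r, Phi1_den c p q r = 0 <-> r = pole) /\
   Phi1_num c p q pole <> 0 /\
   is_lim (fun r => Rabs (Phi1 c t1 t2 p q r)) pole p_infty /\
   (exists L, L <> 0 /\ is_lim (fun r => (r - pole) * Phi1 c t1 t2 p q r) pole L) /\
   (forall r, Lambda p q r -> r < pole)) /\
  (* (2) exactly one root, at [root], right of Lambda and left of the pole *)
  ((forall r, r <> pole -> (Phi1 c t1 t2 p q r = 0 <-> r = root)) /\
   (forall r, Lambda p q r -> r < root) /\
   root < pole) /\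
  (* (3) derivative formula away from the pole, negativity, monotonicity *)
  ((forall r, r <> pole ->
      derivable_pt_lim (Phi1 c t1 t2 p q) r
        (2 * (t2 - t1) * (c^2 * (p - q)^2 - (1 - c)^2)
         / ((1 - c) * (1 - c + c * (p + q - 2 * r))^2)) /\
      2 * (t2 - t1) * (c^2 * (p - q)^2 - (1 - c)^2)
         / ((1 - c) * (1 - c + c * (p + q - 2 * r))^2) < 0) /\
   (forall r s, Lambda p q r -> Lambda p q s -> r < s ->
      Phi1 c t1 t2 p q s < Phi1 c t1 t2 p q r)) /\
  (* (4) strictly positive on Lambda *)
  (forall r, Lambda p q r -> 0 < Phi1 c t1 t2 p q r).
Proof.
  intros Hc Ht1 Ht2 Hp Hq Hpq pole root.
  assert (Hc1 : 0 < 1 - c) by lra.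
  set (K := (t2 - t1) / (1 - c)).
  assert (HK : 0 < K) by (unfold K; apply Rdiv_lt_0_compat; lra).
  assert (Hd : c^2 * (p - q)^2 < (1 - c)^2).
  { assert (h1 : (p - q)^2 < 1) by nra.
    assert (h2 : c^2 <= (1-c)^2) by nra.
    assert (h3 : 0 < c^2) by nra. nra. }
  assert (Hden : forall r, Phi1_den c p q r = -2*c*(r - pole)).
  { intro r. unfold Phi1_den, pole. field. lra. }
  assert (Hnum : forall r, Phi1_num c p q r = -2*(1-c)*(r - root)).
  { intro r. unfold Phi1_num, root. field. lra. }
  assert (Hrp : root - pole = (c^2*(p-q)^2 - (1-c)^2) / (2*c*(1-c))).
  { unfold root, pole. field. lra. }
  assert (Hrp' : root < pole).
  { assert ((c^2*(p-q)^2 - (1-c)^2) / (2*c*(1-c)) < 0).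
    { apply Rdiv_neg_pos; [lra|]. apply Rmult_lt_0_compat; lra. }
    lra. }
  assert (HLr : forall r, Lambda p q r -> r < root).
  { intros r [_ Hr]. unfold root.
    assert (0 <= c * (p - q)^2 / (2 * (1 - c))).
    { apply Rmult_le_pos; [apply Rmult_le_pos; [lra| apply pow2_ge_0]|].
      left; apply Rinv_0_lt_compat; lra. }
    assert (Rmin p q <= p) by apply Rmin_l.
    assert (Rmin p q <= q) by apply Rmin_r. lra. }
  assert (HPhi : forall r, r <> pole ->
            Phi1 c t1 t2 p q r = K * (1-c) / c * (r - root) / (r - pole)).
  { intros r Hr. unfold Phi1. fold K. rewrite Hden, Hnum. field.
    repeat split; try lra; intro h; apply Hr; lra. }
  assert (Hnp : Phi1_num c p q pole <> 0).
  { rewrite Hnum. intro h. apply Rmult_integral in h. destruct h; lra. }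
  split; [split; [|split; [|split; [|split]]]|split; [split; [|split]|split]].
  - intro r. rewrite Hden. split; intro h.
    + apply Rmult_integral in h. destruct h; lra.
    + subst r. ring.
  - exact Hnp.
  - apply is_lim_ext_loc with
      (f := fun r => Rabs (K * Phi1_num c p q r) / (2*c) * / Rabs (r - pole)).
    + exists (mkposreal 1 Rlt_0_1). intros y _ Hy.
      assert (Hy' : y - pole <> 0) by (intro h; apply Hy; lra).
      unfold Phi1. fold K.
      replace (K * (Phi1_num c p q y / Phi1_den c p q y))
        with ((K * Phi1_num c p q y) * / (-2*c) * / (y - pole))
        by (rewrite Hden; field; split; lra).
      rewrite !Rabs_mult, !Rabs_inv.
      replace (Rabs (-2 * c)) with (2*c) by (rewrite Rabs_left; lra).
      unfold Rdiv. reflexivity.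
    + replace p_infty with (Rbar_mult (Rabs (K * Phi1_num c p q pole) / (2*c)) p_infty).
      2:{ assert (0 < Rabs (K * Phi1_num c p q pole) / (2*c)).
          { apply Rdiv_lt_0_compat; [|lra]. apply Rabs_pos_lt.
            intro h; apply Rmult_integral in h; destruct h; [lra|contradiction]. }
          simpl. destruct Rle_dec; [|lra].
          destruct Rle_lt_or_eq_dec; [reflexivity|lra]. }
      apply is_lim_mult.
      * apply (is_lim_continuity
                 (comp (fun x => x / (2*c)) (comp Rabs (fun r => K * Phi1_num c p q r)))).
        apply continuity_pt_comp; [|reg].
        apply continuity_pt_comp; [unfold Phi1_num; reg| apply Rcontinuity_abs].
      * apply lim_inv_abs.
      * simpl. apply Rgt_not_eq. apply Rdiv_lt_0_compat; [|lra]. apply Rabs_pos_lt.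
        intro h; apply Rmult_integral in h; destruct h; [lra|contradiction].
  - exists (- K * Phi1_num c p q pole / (2*c)). split.
    + intro h. assert (K * Phi1_num c p q pole = 0).
      { apply (Rmult_eq_reg_r (- / (2*c))). rewrite Rmult_0_l. rewrite <- h. field. lra.
        apply Ropp_neq_0_compat, Rinv_neq_0_compat; lra. }
      apply Rmult_integral in H; destruct H; [lra|auto].
    + apply is_lim_ext_loc with (f := fun y => - K * Phi1_num c p q y / (2*c)).
      * exists (mkposreal 1 Rlt_0_1). intros y _ Hy.
        assert (Hy' : y - pole <> 0) by (intro h; apply Hy; lra).
        unfold Phi1. fold K. rewrite Hden. field. split; lra.
      * apply (is_lim_continuity (fun y => - K * Phi1_num c p q y / (2*c))).
        unfold Phi1_num; reg.
  - intros r Hr. specialize (HLr r Hr). lra.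
  - intros r Hr. rewrite (HPhi r Hr). split; intro h.
    + assert (h' : K * (1 - c) / c * (r - root) = 0).
      { apply (Rmult_eq_reg_r (/ (r - pole))). rewrite Rmult_0_l. exact h.
        apply Rinv_neq_0_compat. intro e; apply Hr; lra. }
      apply Rmult_integral in h'. destruct h' as [h'|h']; [|lra].
      exfalso. assert (0 < K * (1 - c) / c).
      { apply Rdiv_lt_0_compat; [apply Rmult_lt_0_compat|]; lra. } lra.
    + subst r. unfold Rdiv. ring.
  - exact HLr.
  - exact Hrp'.
  - split.
    + intros r Hr. split.
    * apply is_derive_Reals.
      assert (Hd' : Phi1_den c p q r <> 0).
      { rewrite Hden. intro h; apply Rmult_integral in h; destruct h as [h|h]; [lra|].
        apply Hr; lra. }
      unfold Phi1, Phi1_num. unfold Phi1_den in Hd' |- *.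
      auto_derive.
      -- exact Hd'.
      -- field. split; [exact Hd'|lra].
    * assert (Hd' : 1 - c + c * (p + q - 2 * r) <> 0).
      { fold (Phi1_den c p q r). rewrite Hden. intro h; apply Rmult_integral in h;
        destruct h as [h|h]; [lra|]. apply Hr; lra. }
      apply Rdiv_neg_pos.
      -- assert (0 < t2 - t1) by lra. nra.
      -- apply Rmult_lt_0_compat; [lra|]. apply pow2_gt_0. exact Hd'.
    + intros r s Hr Hs Hrs.
      pose proof (HLr r Hr). pose proof (HLr s Hs).
      rewrite (HPhi r) by lra. rewrite (HPhi s) by lra.
      set (M := K * (1 - c) / c).
      assert (HM : 0 < M) by (unfold M; apply Rdiv_lt_0_compat; [apply Rmult_lt_0_compat|]; lra).
      replace (M * (s - root) / (s - pole)) with (M - M * (pole - root) * / (pole - s))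
        by (field; lra).
      replace (M * (r - root) / (r - pole)) with (M - M * (pole - root) * / (pole - r))
        by (field; lra).
      assert (/ (pole - r) < / (pole - s)).
      { apply Rinv_lt_contravar; [apply Rmult_lt_0_compat|]; lra. }
      assert (0 < M * (pole - root)) by (apply Rmult_lt_0_compat; lra).
      nra.
  - intros r Hr. pose proof (HLr r Hr). unfold Phi1. fold K.
    apply Rmult_lt_0_compat; [exact HK|]. apply Rdiv_lt_0_compat.
    + rewrite Hnum. nra.
    + rewrite Hden. nra.
Qed.
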